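(* Let $p$ be an odd prime and let $\sim$ be a nontrivial equivalence relation on $\mathbb{Z}_p^\times = \mathbb{Z}_p - \{0\}$ such that for $x \neq y$, $x \sim y$ implies $(y-x) \sim (-x)$. Then: (1) for every $x \in \mathbb{Z}_p^\times$, $x \not\sim (-x)$; (2) if $x,y$ are distinct elements of some equivalence class, then $y-x$ does not belong to that class; (3) if $x \sim y$ and $x \neq y$, then $(-x) \not\sim (-y)$; (4) if $x,y$ and $z,w$ are two pairs of distinct elements of some equivalence class (i.e. $x\neq y$, $z \neq w$, all four in the same class) and $x-y=z-w$, then $x=z$ and $y=w$.
   Context: An equivalence relation is nontrivial if it has at least two equivalence classes. *)

(* Defs.v *)
(* Z_p = 'F_p (prime p); Z_p^x = nonzero elements of 'F_p. *)
From mathcomp Require Import all_boot all_order all_algebra.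
Set Implicit Arguments. Unset Strict Implicit. Unset Printing Implicit Defensive.
Import GRing.Theory.
Local Open Scope ring_scope.

Definition equiv_on_units (p : nat) (R : 'F_p -> 'F_p -> Prop) : Prop :=
  [/\ (forall x : 'F_p, x != 0 -> R x x),
      (forall x y : 'F_p, x != 0 -> y != 0 -> R x y -> R y x) &
      (forall x y z : 'F_p, x != 0 -> y != 0 -> z != 0 ->
          R x y -> R y z -> R x z)].

Definition nontrivial_on_units (p : nat) (R : 'F_p -> 'F_p -> Prop) : Prop :=
  exists x y : 'F_p, [/\ x != 0, y != 0 & ~ R x y].

(* Main.v *)
Require Import Defs.
From mathcomp Require Import all_boot all_order all_algebra.
Import GRing.Theory.
Local Open Scope ring_scope.
Lemma two_nz (p : nat) (pp : prime p) (p2 : (2 < p)%N) (x : 'F_p) : x != 0 -> x != - x.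
Proof.
move=> xn; apply/eqP => e.
have : x *+ 2 = 0 by rewrite mulr2n {1}e addNr.
rewrite -mulr_natr => /eqP; rewrite mulf_eq0 (negbTE xn) /=.
apply/negP; apply/eqP => /(congr1 (@nat_of_ord _)); rewrite (val_Fp_nat pp 2) /= modn_small //.
Qed.
Lemma all_nat (p : nat) (y : 'F_p) : y = (val y)%:R.
Proof. by rewrite natr_Zp. Qed.
Lemma part1 (p : nat) (p_prime : prime p) (p_odd : (2 < p)%N)
  (R : 'F_p -> 'F_p -> Prop)
  (R_equiv : equiv_on_units R)
  (R_nontriv : nontrivial_on_units R)
  (R_shift : forall x y : 'F_p, x != 0 -> y != 0 -> x != y ->
      R x y -> R (y - x) (- x)) :
  (forall x : 'F_p, x != 0 -> ~ R x (- x)).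
Proof.
case: R_equiv => Rr Rs Rt x xn Rxn.
have nxn : - x != 0 by rewrite oppr_eq0.
have H : forall k, x *+ k = 0 \/ R x (x *+ k).
  elim=> [|k [IH|IH]]; first by left.
    by right; rewrite mulrSr IH add0r; apply: (Rr).
  rewrite mulrSr; set z := x *+ k in IH *.
  have [zn|zn] := eqVneq z 0; first by right; rewrite zn add0r; apply: (Rr).
  have [e|ne] := eqVneq (z + x) 0; first by left.
  right; apply: (Rs) => //.
  have nz : - x != z.
    apply: contra ne => /eqP <-; by rewrite addNr.
  have := R_shift _ _ nxn zn nz (Rt _ _ _ nxn xn zn (Rs _ _ xn nxn Rxn) IH).
  by rewrite opprK.
have Ry : forall y, y != 0 -> R x y.
  move=> y yn.
  have : y = x *+ val (y / x).
    by rewrite -mulr_natr -all_nat mulrC divfK.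
  move=> ey; case: (H (val (y / x))); rewrite -ey //.
  by move=> e; rewrite e eqxx in yn.
case: R_nontriv => a [b [an bn nab]]; apply: nab.
apply: (Rt _ x) => //; [exact: Rs (Ry _ an)|exact: Ry].
Qed.

Theorem proposition3p15 (p : nat) (p_prime : prime p) (p_odd : (2 < p)%N)
  (R : 'F_p -> 'F_p -> Prop)
  (R_equiv : equiv_on_units R)
  (R_nontriv : nontrivial_on_units R)
  (R_shift : forall x y : 'F_p, x != 0 -> y != 0 -> x != y ->
      R x y -> R (y - x) (- x)) :
  (* (1) *)
  (forall x : 'F_p, x != 0 -> ~ R x (- x)) /\
  (* (2) *)
  (forall x y : 'F_p, x != 0 -> y != 0 -> x != y -> R x y -> ~ R (y - x) x) /\
  (* (3) *)
  (forall x y : 'F_p, x != 0 -> y != 0 -> x != y -> R x y -> ~ R (- x) (- y)) /\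
  (* (4) *)
  (forall x y z w : 'F_p, x != 0 -> y != 0 -> z != 0 -> w != 0 ->
      x != y -> z != w -> R x y -> R x z -> R x w ->
      x - y = z - w -> x = z /\ y = w).
Proof.
have P1 := @part1 p p_prime p_odd R R_equiv R_nontriv R_shift.
case: R_equiv => Rr Rs Rt.
have df : forall a b : 'F_p, a != b -> b - a != 0.
  by move=> a b ab; rewrite subr_eq0 eq_sym.
have P3 : forall x y : 'F_p, x != 0 -> y != 0 -> x != y -> R x y -> ~ R (- x) (- y).
  move=> x y xn yn xy Rxy Rn.
  have nxn : - x != 0 by rewrite oppr_eq0.
  have nyn : - y != 0 by rewrite oppr_eq0.
  have nyx : - y != - x by rewrite (inj_eq oppr_inj) eq_sym.
  have h1 := R_shift _ _ xn yn xy Rxy.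
  have h2 := R_shift _ _ nyn nxn nyx (Rs _ _ nxn nyn Rn).
  rewrite !opprK addrC in h2.
  apply: (P1 y yn).
  apply: (Rt _ (- x)) => //.
  apply: (Rt _ (y - x)) => //; first exact: df.
  by apply: (Rs) => //; exact: df.
split=> //; split.
  move=> x y xn yn xy Rxy Ryx.
  have nxn : - x != 0 by rewrite oppr_eq0.
  apply: (P1 x xn); apply: (Rt _ (y - x)) => //; first exact: df.
    by apply: (Rs) => //; exact: df.
  exact: R_shift.
split=> // x y z w xn yn zn wn xy zw Rxy Rxz Rxw e.
have h1 := R_shift _ _ xn yn xy Rxy.
have h2 := R_shift _ _ zn wn zw (Rt _ _ _ zn xn wn (Rs _ _ xn zn Rxz) Rxw).
have e' : y - x = w - z by rewrite -opprB e opprB.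
rewrite e' in h1.
have nxn : - x != 0 by rewrite oppr_eq0.
have nzn : - z != 0 by rewrite oppr_eq0.
have xz : x = z.
  apply/eqP; apply/negPn/negP => xz.
  apply: (P3 x z xn zn xz Rxz).
  have wz := df _ _ zw.
  apply: (Rt _ (w - z)) => //.
  by apply: (Rs).
split=> //; move: e; rewrite xz => /addrI /oppr_inj //.
Qed.
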